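(* Let $d\ge3$ and consider the mutating contact process $(\xi_t)_{t\ge0}$ on the $d$-regular tree $\mathbb{T}_d$ with death rate $\delta>0$ and mutation rate $\mu>0$, started from any finite initial configuration with $\{x:\xi_0(x)=1\}\neq\varnothing$. If $\delta+\mu$ is sufficiently small, then \[ P\left({}^{1}\xi_t\neq\varnothing \text{ for all } t>0\right)>0 . \]
   Context: $\mathbb{T}_d$ is the infinite tree in which every vertex has exactly $d$ neighbours; $x\sim y$ denotes adjacency. The mutating contact process with parameters $\delta>0$ (death rate) and $\mu>0$ (mutation rate) is the Feller process $\xi_t\in\{0,1,2\}^{\mathbb{T}_d}$ ($0$ = vacant, $1$ = the distinguished strain, $2$ = any other strain) which, writing $n(x,\xi,i)=\#\{y\sim x:\xi(y)=i\}$, makes the following transitions at each site $x$: $i\to0$ at rate $\delta$ ($i=1,2$); $0\to i$ at rate $n(x,\xi,i)$ ($i=1,2$); $1\to2$ at rate $\mu$. A configuration is finite if only finitely many sites are nonzero. ${}^{1}\xi_t=\{x:\xi_t(x)=1\}$. *)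

(* Defs.v *)
From Stdlib Require Import Reals List Arith Lia.
Import ListNotations.
Open Scope R_scope.

(** * The d-regular tree T_d
    A vertex is a list of nat, read as the path from the root (the root is [])
    with the most recent step at the head.  The root has children [a] for a < d;
    a non-root vertex v has children a :: v for a < d-1 and parent (tail v). *)
Definition vertex := list nat.
Definition vertex_eq_dec : forall x y : vertex, {x = y} + {x <> y} :=
  list_eq_dec Nat.eq_dec.

Fixpoint is_vertex (d : nat) (v : vertex) : Prop :=
  match v with
  | [] => True
  | a :: p => is_vertex d p /\ (a < match p with [] => d | _ => d - 1 end)%nat
  end.

Definition neighbours (d : nat) (v : vertex) : list vertex :=
  match v with
  | [] => map (fun a => [a]) (seq 0 d)
  | _ :: p => p :: map (fun a => a :: v) (seq 0 (d - 1))
  end.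

Definition adj (d : nat) (x y : vertex) : Prop :=
  is_vertex d x /\ In y (neighbours d x).

Inductive strain := vac | one | two .

Definition config := vertex -> strain.

Definition is_vac (s : strain) : bool := match s with vac => true | _ => false end.
Definition is_one (s : strain) : bool := match s with one => true | _ => false end.

Definition upd (xi : config) (y : vertex) (s : strain) : config :=
  fun v => if vertex_eq_dec v y then s else xi v.

Definition covers (d : nat) (xi : config) (L : list vertex) : Prop :=
  forall v, xi v <> vac -> is_vertex d v /\ In v L.

(** * Transitions of the mutating contact process
    From a finite configuration xi (with covering list L) the possible jumps are,
    with their rates:
    - each occupied x becomes 0 at rate delta;
    - each x of type 1 becomes 2 at rate mu;
    - for each occupied x and each vacant neighbour y, y takes the type of x
      at rate 1 (so a vacant y becomes i at total rate n(y,xi,i)).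
    A jump is a triple (rate, new configuration, new covering list). *)
Definition births (d : nat) (xi : config) (L : list vertex) (x : vertex) (s : strain)
  : list (R * (config * list vertex)) :=
  map (fun y => (1, (upd xi y s, y :: L)))
      (filter (fun y => is_vac (xi y)) (neighbours d x)).

Definition moves (d : nat) (delta mu : R) (xi : config) (L : list vertex)
  : list (R * (config * list vertex)) :=
  flat_map (fun x =>
     match xi x with
     | vac => []
     | one => (delta, (upd xi x vac, L)) :: (mu, (upd xi x two, L))
                :: births d xi L x one
     | two => (delta, (upd xi x vac, L)) :: births d xi L x two
     end) (nodup vertex_eq_dec L).

Definition total_rate (d : nat) (delta mu : R) (xi : config) (L : list vertex) : R :=
  fold_right (fun m acc => fst m + acc) 0 (moves d delta mu xi L).

Definition has_one (xi : config) (L : list vertex) : bool :=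
  existsb (fun x => is_one (xi x)) L.

(** surv_n d delta mu n xi L = probability that, for the process started at xi,
    the set {x : xi_t(x) = 1} is non-empty at the initial time and after each of
    the first n jumps (computed through the embedded jump chain, which moves
    from xi to xi' with probability rate/total_rate). *)
Fixpoint surv_n (d : nat) (delta mu : R) (n : nat) (xi : config) (L : list vertex) : R :=
  if has_one xi L then
    match n with
    | O => 1
    | S n' =>
        fold_right
          (fun m acc => fst m / total_rate d delta mu xi L
                          * surv_n d delta mu n' (fst (snd m)) (snd (snd m)) + acc)
          0 (moves d delta mu xi L)
    end
  else 0.

(* Main.v *)
Require Import Defs.
From Stdlib Require Import Reals List.
From Stdlib Require Import Lra Lia Arith Classical ClassicalEpsilon FinFun.
Import ListNotations.
Open Scope R_scope.

Definition suffix (s z : vertex) : Prop := exists w, z = w ++ s.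

Lemma suffix_refl s : suffix s s. Proof. exists []. reflexivity. Qed.
Lemma suffix_len s z : suffix s z -> (length s <= length z)%nat.
Proof. intros [w ->]. rewrite length_app. lia. Qed.
Lemma suffix_cons_l a s z : suffix (a::s) z -> suffix s z.
Proof. intros [w ->]. exists (w ++ [a]). rewrite <- app_assoc. reflexivity. Qed.
Lemma suffix_cons_r b s z : suffix s z -> suffix s (b::z).
Proof. intros [w ->]. exists (b::w). reflexivity. Qed.
Lemma suffix_cons_inv s b z : suffix s (b::z) -> s = b::z \/ suffix s z.
Proof. intros [w H]. destruct w as [|c w]; simpl in H. left; auto. right. inversion H; subst. exists w; auto. Qed.
Lemma app_same_len (w1 w2 s1 s2 : list nat) : w1 ++ s1 = w2 ++ s2 -> length w1 = length w2 -> s1 = s2.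
Proof. revert w2; induction w1; intros [|b w2] H L; simpl in *; try discriminate; auto.
  inversion H. apply (IHw1 w2); auto. Qed.
Lemma suffix_uniq s1 s2 z : suffix s1 z -> suffix s2 z -> length s1 = length s2 -> s1 = s2.
Proof.
  intros [w1 H1] [w2 H2] Hl. subst z.
  assert (length w1 = length w2).
  { apply (f_equal (@length nat)) in H2; rewrite !length_app in H2; lia. }
  eapply app_same_len; eauto.
Qed.

Definition inbranch (u v z : vertex) : Prop :=
  if vertex_eq_dec v (tl u) then ~ suffix u z else suffix v z.

Lemma nb_cases d u v : In v (neighbours d u) -> (exists a, u = a :: v) \/ (exists a, v = a :: u).
Proof.
  destruct u as [|b p]; simpl; intros H.
  - right. apply in_map_iff in H. destruct H as [a [<- _]]. eauto.
  - destruct H as [<-|H]. left; eauto. right. apply in_map_iff in H. destruct H as [a [<- _]]. eauto.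
Qed.

Lemma inbranch_parent a p z : inbranch (a::p) p z <-> ~ suffix (a::p) z.
Proof. unfold inbranch. simpl. destruct (vertex_eq_dec p p); tauto. Qed.
Lemma inbranch_child a u z : inbranch u (a::u) z <-> suffix (a::u) z.
Proof. unfold inbranch. destruct (vertex_eq_dec (a::u) (tl u)) as [e|].
  - exfalso. destruct u as [|n u]; simpl in e. discriminate.
    assert (length (a::n::u) = length u) by (rewrite e; auto). simpl in H; lia.
  - tauto. Qed.

Lemma inb_self_v d u v : In v (neighbours d u) -> inbranch u v v.
Proof. intros H. destruct (nb_cases _ _ _ H) as [[a ->]|[a ->]].
  - apply inbranch_parent. intros S. apply suffix_len in S. simpl in S. lia.
  - apply inbranch_child. apply suffix_refl. Qed.
Lemma inb_self_u d u v : In v (neighbours d u) -> ~ inbranch u v u.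
Proof. intros H. destruct (nb_cases _ _ _ H) as [[a ->]|[a ->]].
  - rewrite inbranch_parent. intros S; apply S, suffix_refl.
  - rewrite inbranch_child. intros S. apply suffix_len in S. simpl in S. lia. Qed.

Lemma treeT d x y u v : In y (neighbours d x) -> In v (neighbours d u) ->
  ~ inbranch u v x -> inbranch u v y -> x = u /\ y = v.
Proof.
  intros Hxy Huv Hx Hy.
  destruct (nb_cases _ _ _ Huv) as [[a ->]|[a ->]].
  - rewrite inbranch_parent in Hx, Hy. apply NNPP in Hx.
    destruct (nb_cases _ _ _ Hxy) as [[b ->]|[b ->]].
    + destruct (suffix_cons_inv _ _ _ Hx) as [E|S].
      * inversion E; subst; auto.
      * exfalso. apply Hy. exact S.
    + exfalso. apply Hy. apply suffix_cons_r. auto.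
  - rewrite inbranch_child in Hx, Hy.
    destruct (nb_cases _ _ _ Hxy) as [[b ->]|[b ->]].
    + exfalso. apply Hx. apply suffix_cons_r; auto.
    + destruct (suffix_cons_inv _ _ _ Hy) as [E|S].
      * inversion E; subst; auto.
      * contradiction.
Qed.

Lemma treeT2 d x y w z : In y (neighbours d x) -> In w (neighbours d y) -> w <> x ->
  inbranch y w z -> inbranch x y z.
Proof.
  intros Hxy Hyw Hne H.
  destruct (nb_cases _ _ _ Hxy) as [[b ->]|[b ->]].
  - rewrite inbranch_parent.
    destruct (nb_cases _ _ _ Hyw) as [[c Ey]|[c ->]].
    + subst y. rewrite inbranch_parent in H. intros S. apply H. exact (suffix_cons_l _ _ _ S).
    + rewrite inbranch_child in H. intros S. apply Hne.
      apply (suffix_uniq _ _ z); auto.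
  - rewrite inbranch_child.
    destruct (nb_cases _ _ _ Hyw) as [[c E]|[c ->]].
    + inversion E; subst. contradiction.
    + rewrite inbranch_child in H. exact (suffix_cons_l _ _ _ H).
Qed.

Lemma nb_vertex d u v : is_vertex d u -> In v (neighbours d u) -> is_vertex d v.
Proof.
  destruct u as [|b p]; simpl; intros Hu H.
  - apply in_map_iff in H. destruct H as [a [<- Ha]]. apply in_seq in Ha. simpl. split; auto. lia.
  - destruct H as [<-|H]. tauto. apply in_map_iff in H. destruct H as [a [<- Ha]].
    apply in_seq in Ha. simpl. split. exact Hu. lia.
Qed.

Lemma nb_length d u : (1 <= d)%nat -> length (neighbours d u) = d.
Proof. intros Hd. destruct u; simpl; rewrite length_map, length_seq; lia. Qed.

Lemma nb_nodup d u : NoDup (neighbours d u).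
Proof.
  destruct u as [|b p]; simpl.
  - apply Injective_map_NoDup. intros x y E; inversion E; auto. apply seq_NoDup.
  - constructor.
    + intros H. apply in_map_iff in H. destruct H as [a [E _]].
      apply (f_equal (@length nat)) in E. simpl in E. lia.
    + apply Injective_map_NoDup. intros x y E; inversion E; auto. apply seq_NoDup.
Qed.

Lemma nb_exists d u : (1 <= d)%nat -> exists v, In v (neighbours d u).
Proof. intros Hd. destruct u as [|b p]; simpl.
  - exists [0%nat]. apply in_map_iff. exists 0%nat. split; auto. apply in_seq. lia.
  - exists p. auto. Qed.
Definition cnt {A} (p : A -> bool) (l : list A) : nat := length (filter p l).

Lemma cnt_mono {A} (p p' : A -> bool) l :
  (forall v, In v l -> p v = true -> p' v = true) -> (cnt p l <= cnt p' l)%nat.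
Proof. unfold cnt. induction l as [|a l IH]; simpl; intros H; auto.
  destruct (p a) eqn:E.
  - rewrite (H a (or_introl eq_refl) E). simpl. specialize (IH (fun v Hv => H v (or_intror Hv))). lia.
  - destruct (p' a); simpl; specialize (IH (fun v Hv => H v (or_intror Hv))); lia. Qed.

Lemma cnt_mono1 {A} (p p' : A -> bool) l y : NoDup l ->
  (forall v, In v l -> p v = true -> p' v = true \/ v = y) -> (cnt p l <= cnt p' l + 1)%nat.
Proof. unfold cnt. induction l as [|a l IH]; simpl; intros ND H; [lia|].
  inversion ND; subst.
  destruct (p a) eqn:E.
  - destruct (H a (or_introl eq_refl) E) as [E'|E'].
    + rewrite E'. simpl. specialize (IH H3 (fun v Hv => H v (or_intror Hv))). lia.
    + subst a. assert (cnt p l <= cnt p' l)%nat.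
      { apply cnt_mono. intros v Hv Pv. destruct (H v (or_intror Hv) Pv); auto. subst; contradiction. }
      unfold cnt in H0. destruct (p' y); simpl; lia.
  - destruct (p' a); simpl; specialize (IH H3 (fun v Hv => H v (or_intror Hv))); lia. Qed.

Lemma cnt_all {A} (p : A -> bool) l : (forall v, In v l -> p v = true) -> cnt p l = length l.
Proof. unfold cnt. induction l as [|a l IH]; simpl; intros H; auto.
  rewrite (H a (or_introl eq_refl)). simpl. rewrite IH; auto. Qed.

Lemma cnt_all_but {A} (p : A -> bool) l x : NoDup l ->
  (forall v, In v l -> v <> x -> p v = true) -> (length l <= cnt p l + 1)%nat.
Proof. unfold cnt. induction l as [|a l IH]; simpl; intros ND H; [lia|].
  inversion ND; subst. destruct (p a) eqn:E.
  - simpl. specialize (IH H3 (fun v Hv => H v (or_intror Hv))). lia.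
  - assert (a = x). { apply NNPP. intros C. rewrite (H a (or_introl eq_refl) C) in E. discriminate. }
    subst. assert (E2 : cnt p l = length l).
    { apply cnt_all. intros v Hv. apply H; auto. intros ->; contradiction. }
    unfold cnt in E2. rewrite E2. lia. Qed.

Lemma cnt_le_length {A} (p : A -> bool) l : (cnt p l <= length l)%nat.
Proof. unfold cnt. induction l; simpl; [lia|]. destruct (p a); simpl; lia. Qed.

Lemma cnt_filter {A} (p q : A -> bool) l : (forall v, p v = true -> q v = true) ->
  cnt p (filter q l) = cnt p l.
Proof. unfold cnt. induction l as [|a l IH]; simpl; intros H; auto.
  destruct (q a) eqn:Eq; simpl.
  - destruct (p a); simpl; rewrite IH; auto.
  - destruct (p a) eqn:Ep. rewrite (H a Ep) in Eq. discriminate. auto. Qed.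

Definition sumn {A} (f : A -> nat) (l : list A) : nat := fold_right (fun a acc => (f a + acc)%nat) 0%nat l.

Lemma sumn_le {A} (f g : A -> nat) l : (forall u, In u l -> (f u <= g u)%nat) -> (sumn f l <= sumn g l)%nat.
Proof. induction l; simpl; intros H; [lia|]. specialize (H a (or_introl eq_refl)) as H1.
  specialize (IHl (fun u Hu => H u (or_intror Hu))). lia. Qed.
Lemma sumn_add {A} (f g : A -> nat) l : sumn (fun u => (f u + g u)%nat) l = (sumn f l + sumn g l)%nat.
Proof. induction l; simpl; lia. Qed.

Definition ind (x : vertex) (c : nat) (u : vertex) : nat := if vertex_eq_dec u x then c else 0%nat.

Lemma sumn_ind_zero x c l : ~ In x l -> sumn (ind x c) l = 0%nat.
Proof. induction l; simpl; intros H; auto. unfold ind at 1. destruct (vertex_eq_dec a x).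
  subst; tauto. rewrite IHl; auto. Qed.
Lemma sumn_ind_le x c l : NoDup l -> (sumn (ind x c) l <= c)%nat.
Proof. induction l; simpl; intros ND; [lia|]. inversion ND; subst. unfold ind at 1.
  destruct (vertex_eq_dec a x). subst. rewrite sumn_ind_zero; auto. lia. simpl. auto. Qed.
Lemma sumn_ind_eq x c l : NoDup l -> In x l -> sumn (ind x c) l = c.
Proof. induction l; simpl; intros ND Hx; [tauto|]. inversion ND; subst. unfold ind at 1.
  destruct (vertex_eq_dec a x).
  - subst. rewrite sumn_ind_zero; auto; lia.
  - destruct Hx. congruence. simpl. auto. Qed.

Lemma sumn_elem {A} (f : A -> nat) l x : In x l -> (f x <= sumn f l)%nat.
Proof. induction l; simpl; intros H; [tauto|]. destruct H; subst; [lia|]. specialize (IHl H). lia. Qed.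

Lemma sumn_remove_le (f : vertex -> nat) a l : (sumn f (remove vertex_eq_dec a l) <= sumn f l)%nat.
Proof. induction l as [|b l IH]; simpl; [lia|]. destruct (vertex_eq_dec a b); simpl; lia. Qed.
Lemma sumn_remove (f : vertex -> nat) a l : In a l -> (f a + sumn f (remove vertex_eq_dec a l) <= sumn f l)%nat.
Proof. induction l as [|b l IH]; simpl; intros H; [tauto|]. destruct (vertex_eq_dec a b).
  - subst. pose proof (sumn_remove_le f b l). lia.
  - simpl. destruct H. congruence. specialize (IH H). lia. Qed.
Lemma sumn_incl (f : vertex -> nat) l1 l2 : NoDup l1 -> incl l1 l2 -> (sumn f l1 <= sumn f l2)%nat.
Proof. revert l2; induction l1 as [|a l1 IH]; simpl; intros l2 ND Hi; [lia|].
  inversion ND; subst.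
  assert (Ha : In a l2) by (apply Hi; left; auto).
  pose proof (sumn_remove f a l2 Ha).
  assert (sumn f l1 <= sumn f (remove vertex_eq_dec a l2))%nat.
  { apply IH; auto. intros x Hx. apply in_in_remove. intros ->; contradiction. apply Hi; right; auto. }
  lia. Qed.
Definition free (d : nat) (xi : config) (u v : vertex) : Prop :=
  is_vertex d u /\ xi u = one /\ In v (neighbours d u) /\ (forall z, xi z <> vac -> ~ inbranch u v z).
Definition freeb d xi u v : bool := if excluded_middle_informative (free d xi u v) then true else false.
Lemma freeb_spec d xi u v : freeb d xi u v = true <-> free d xi u v.
Proof. unfold freeb. destruct (excluded_middle_informative _); split; intros; auto; try tauto; discriminate. Qed.
Definition gf d xi u : nat := cnt (freeb d xi u) (neighbours d u).
Definition Fp d xi L : nat := sumn (gf d xi) (nodup vertex_eq_dec L).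

Lemma upd_eq xi y s : upd xi y s y = s.
Proof. unfold upd. destruct (vertex_eq_dec y y); congruence. Qed.
Lemma upd_neq xi y s v : v <> y -> upd xi y s v = xi v.
Proof. unfold upd. destruct (vertex_eq_dec v y); congruence. Qed.

Lemma free_shrink d xi x s u v : (s <> vac -> xi x <> vac) -> u <> x ->
  free d xi u v -> free d (upd xi x s) u v.
Proof. intros Hs Hu [V [O [N B]]]. repeat split; auto. rewrite upd_neq; auto.
  intros z Hz. destruct (vertex_eq_dec z x).
  - subst. rewrite upd_eq in Hz. apply B; auto.
  - rewrite upd_neq in Hz; auto. Qed.

Lemma free_birth d xi x y s u v : xi y = vac -> xi x <> vac -> is_vertex d x -> In y (neighbours d x) ->
  free d xi u v -> free d (upd xi y s) u v \/ (u = x /\ v = y).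
Proof. intros Hy Hx Vx Nxy [V [O [N B]]].
  destruct (classic (inbranch u v y)) as [I|I].
  - right. destruct (treeT d x y u v Nxy N (B x Hx) I). auto.
  - left. assert (u <> y) by (intros ->; congruence).
    repeat split; auto. rewrite upd_neq; auto.
    intros z Hz. destruct (vertex_eq_dec z y). subst; auto. rewrite upd_neq in Hz; auto. Qed.

Lemma free_new d xi x y w : free d xi x y -> In w (neighbours d y) -> w <> x -> free d (upd xi y one) y w.
Proof. intros [V [O [N B]]] Nw Hw. repeat split; auto.
  - eapply nb_vertex; eauto.
  - apply upd_eq.
  - intros z Hz. destruct (vertex_eq_dec z y).
    + subst. apply (inb_self_u d); auto.
    + rewrite upd_neq in Hz; auto. intros I. apply (B z Hz). eapply treeT2; eauto. Qed.

Lemma gf_zero d xi u : xi u <> one -> gf d xi u = 0%nat.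
Proof. intros H. unfold gf. assert (cnt (freeb d xi u) (neighbours d u) <= cnt (fun _ => false) (neighbours d u))%nat.
  { apply cnt_mono. intros v _ F. apply freeb_spec in F. destruct F as [_ [O _]]. contradiction. }
  unfold cnt at 2 in H0. rewrite filter_false in H0. simpl in H0. lia. Qed.

Lemma gf_le_d d xi u : (1 <= d)%nat -> (gf d xi u <= d)%nat.
Proof. intros Hd. unfold gf. pose proof (cnt_le_length (freeb d xi u) (neighbours d u)).
  rewrite nb_length in H; auto. Qed.

Lemma Fp_pointwise d xi xi' L e : (forall u, (gf d xi u <= gf d xi' u + ind e (gf d xi e) u)%nat) ->
  (Fp d xi L <= Fp d xi' L + gf d xi e)%nat.
Proof. intros H. unfold Fp.
  eapply Nat.le_trans. apply sumn_le. intros u _. apply H.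
  rewrite sumn_add. pose proof (sumn_ind_le e (gf d xi e) _ (NoDup_nodup vertex_eq_dec L)). lia. Qed.

Lemma F_shrink d xi L x s : (s <> vac -> xi x <> vac) ->
  (Fp d xi L <= Fp d (upd xi x s) L + gf d xi x)%nat.
Proof. intros Hs. apply Fp_pointwise. intros u. unfold ind.
  destruct (vertex_eq_dec u x). subst; lia.
  assert (gf d xi u <= gf d (upd xi x s) u)%nat; [|lia].
  apply cnt_mono. intros v _ F. apply freeb_spec in F. apply freeb_spec. apply free_shrink; auto. Qed.

Lemma Fp_cons_ge d xi y L : (Fp d xi L <= sumn (gf d xi) (nodup vertex_eq_dec (y::L)))%nat.
Proof. unfold Fp. apply sumn_incl. apply NoDup_nodup. intros z Hz. apply nodup_In. apply nodup_In in Hz. right; auto. Qed.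

Lemma gf_birth d xi x y s u : xi y = vac -> xi x <> vac -> is_vertex d x -> In y (neighbours d x) ->
  (gf d xi u <= gf d (upd xi y s) u + ind x (if freeb d xi x y then 1 else 0) u)%nat.
Proof. intros Hy Hx Vx N. unfold ind. destruct (vertex_eq_dec u x).
  - subst u. destruct (freeb d xi x y) eqn:E.
    + unfold gf. apply (cnt_mono1 _ _ _ y). apply nb_nodup.
      intros v _ F. apply freeb_spec in F. destruct (free_birth d xi x y s x v Hy Hx Vx N F) as [F'|[_ ->]].
      left; apply freeb_spec; auto. right; auto.
    + rewrite Nat.add_0_r. unfold gf. apply cnt_mono. intros v _ F. apply freeb_spec in F. apply freeb_spec.
      destruct (free_birth d xi x y s x v Hy Hx Vx N F) as [F'|[_ ->]]; auto.
      apply freeb_spec in F. congruence.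
  - rewrite Nat.add_0_r. unfold gf. apply cnt_mono. intros v _ F. apply freeb_spec in F. apply freeb_spec.
    destruct (free_birth d xi x y s u v Hy Hx Vx N F) as [F'|[E _]]; auto. congruence. Qed.

Lemma F_birth_nonfree d xi L x y s : xi y = vac -> xi x <> vac -> is_vertex d x -> In y (neighbours d x) ->
  ~ free d xi x y -> (Fp d xi L <= Fp d (upd xi y s) (y::L))%nat.
Proof. intros Hy Hx Vx N NF. eapply Nat.le_trans. apply (Fp_cons_ge d xi y L).
  unfold Fp. apply sumn_le. intros u _. pose proof (gf_birth d xi x y s u Hy Hx Vx N).
  destruct (freeb d xi x y) eqn:E. apply freeb_spec in E. contradiction.
  unfold ind in H. destruct (vertex_eq_dec u x); lia. Qed.

Lemma F_birth_free d xi L x y : (1 <= d)%nat -> xi y = vac -> xi x <> vac -> is_vertex d x -> In y (neighbours d x) ->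
  free d xi x y -> (Fp d xi L + d <= Fp d (upd xi y one) (y::L) + 2)%nat.
Proof. intros Hd Hy Hx Vx N F.
  assert (Hxy : x <> y) by congruence.
  assert (P : forall u, (gf d xi u + ind y (d - 1) u <= gf d (upd xi y one) u + ind x 1 u)%nat).
  { intros u. pose proof (gf_birth d xi x y one u Hy Hx Vx N) as G.
    assert (E : freeb d xi x y = true) by (apply freeb_spec; auto). rewrite E in G.
    unfold ind in *. destruct (vertex_eq_dec u y).
    - subst u. destruct (vertex_eq_dec y x); [congruence|].
      rewrite gf_zero by congruence.
      assert (length (neighbours d y) <= gf d (upd xi y one) y + 1)%nat.
      { unfold gf. apply (cnt_all_but _ _ x). apply nb_nodup. intros w Hw Hne.
        apply freeb_spec. eapply free_new; eauto. }
      rewrite nb_length in H by auto. lia.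
    - lia. }
  pose proof (Fp_cons_ge d xi y L) as C.
  set (l' := nodup vertex_eq_dec (y::L)) in *.
  assert (ND : NoDup l') by apply NoDup_nodup.
  assert (Iy : In y l') by (apply nodup_In; left; auto).
  pose proof (sumn_le _ _ l' (fun u _ => P u)) as S. rewrite !sumn_add in S.
  rewrite (sumn_ind_eq y _ l' ND Iy) in S. pose proof (sumn_ind_le x 1 l' ND).
  change (Fp d (upd xi y one) (y::L)) with (sumn (gf d (upd xi y one)) l'). lia. Qed.
Definition mv := (R * (config * list vertex))%type.
Definition sumR (phi : mv -> R) (l : list mv) : R := fold_right (fun m acc => phi m + acc) 0 l.

Lemma sumR_app phi l1 l2 : sumR phi (l1 ++ l2) = sumR phi l1 + sumR phi l2.
Proof. induction l1; simpl; [lra|]. unfold sumR in *. rewrite IHl1. lra. Qed.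
Lemma sumR_le phi psi l : (forall m, In m l -> phi m <= psi m) -> sumR phi l <= sumR psi l.
Proof. induction l; simpl; intros H; [lra|]. pose proof (H a (or_introl eq_refl)).
  assert (sumR phi l <= sumR psi l) by (apply IHl; auto). unfold sumR in *. lra. Qed.
Lemma sumR_lin a b phi psi l : sumR (fun m => a * phi m + b * psi m) l = a * sumR phi l + b * sumR psi l.
Proof. induction l; simpl; [lra|]. unfold sumR in *. rewrite IHl. lra. Qed.
Lemma sumR_ext phi psi l : (forall m, phi m = psi m) -> sumR phi l = sumR psi l.
Proof. intros H. induction l; simpl; auto. unfold sumR in *. rewrite IHl, H. auto. Qed.
Lemma sumR_nonneg phi l : (forall m, In m l -> 0 <= phi m) -> 0 <= sumR phi l.
Proof. induction l; simpl; intros H; [lra|]. pose proof (H a (or_introl eq_refl)).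
  assert (0 <= sumR phi l) by (apply IHl; auto). unfold sumR in *. lra. Qed.
Lemma sumR_elem phi l m : (forall m, In m l -> 0 <= phi m) -> In m l -> phi m <= sumR phi l.
Proof. induction l; simpl; intros H Hm; [tauto|]. 
  assert (0 <= sumR phi l) by (apply sumR_nonneg; auto).
  pose proof (H a (or_introl eq_refl)).
  destruct Hm as [<-|Hm]. unfold sumR in *; lra.
  assert (phi m <= sumR phi l) by (apply IHl; auto). unfold sumR in *; lra. Qed.
Lemma sumR_flat_le {A} phi psi (f : A -> list mv) l :
  (forall x, In x l -> sumR phi (f x) <= sumR psi (f x)) ->
  sumR phi (flat_map f l) <= sumR psi (flat_map f l).
Proof. induction l; simpl; intros H; [lra|]. rewrite !sumR_app.
  pose proof (H a (or_introl eq_refl)). assert (sumR phi (flat_map f l) <= sumR psi (flat_map f l)) by (apply IHl; auto).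
  lra. Qed.

Definition pw (n : nat) : R := (/2) ^ n.
Lemma pw_nonneg n : 0 <= pw n. Proof. unfold pw. apply pow_le. lra. Qed.
Lemma pw_le1 n : pw n <= 1.
Proof. unfold pw. induction n; simpl; [lra|]. pose proof (pow_le (/2) n). lra. Qed.
Lemma pw_le a b : (a <= b)%nat -> pw b <= pw a.
Proof. intros H. replace b with (a + (b - a))%nat by lia. unfold pw. rewrite pow_add.
  pose proof (pw_le1 (b - a)). pose proof (pw_nonneg a). unfold pw in *. nra. Qed.
Lemma pw_S a : pw (S a) = pw a / 2. Proof. unfold pw. simpl. lra. Qed.
Lemma pw_shift F F' k : (F <= F' + k)%nat -> pw F' <= pw F * 2 ^ k.
Proof. intros H. assert (pw F' = pw (F' + k) * 2 ^ k).
  { unfold pw. rewrite pow_add, Rmult_assoc, <- Rpow_mult_distr. replace (/2 * 2) with 1 by lra. rewrite pow1. lra. }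
  rewrite H0. apply Rmult_le_compat_r. apply pow_le; lra. apply pw_le; auto. Qed.

Lemma moves_inv d delta mu xi L m : covers d xi L -> 0 <= delta -> 0 <= mu ->
  In m (moves d delta mu xi L) -> 0 <= fst m /\ covers d (fst (snd m)) (snd (snd m)).
Proof.
  intros C Hd Hm Hin. unfold moves in Hin. apply in_flat_map in Hin. destruct Hin as [x [Hx Hin]].
  apply nodup_In in Hx.
  assert (Hbirth : forall s, xi x <> vac -> In m (births d xi L x s) -> 0 <= fst m /\ covers d (fst (snd m)) (snd (snd m))).
  { intros s Ox Hb. unfold births in Hb. apply in_map_iff in Hb. destruct Hb as [y [<- Hy]].
    apply filter_In in Hy. destruct Hy as [Ny Vy]. simpl. split; [lra|].
    intros v Hv. destruct (vertex_eq_dec v y).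
    - subst. split; [|left; auto]. eapply nb_vertex; [|eauto]. apply C; auto.
    - rewrite upd_neq in Hv; auto. destruct (C v Hv). split; auto. right; auto. }
  destruct (xi x) eqn:E; simpl in Hin.
  - tauto.
  - destruct Hin as [<-|[<-|Hin]]; simpl.
    + split; auto. intros v Hv. destruct (vertex_eq_dec v x). subst; rewrite upd_eq in Hv; tauto.
      rewrite upd_neq in Hv; auto.
    + split; auto. intros v Hv. destruct (vertex_eq_dec v x). subst. apply C. congruence.
      rewrite upd_neq in Hv; auto.
    + apply (Hbirth one); auto. congruence.
  - destruct Hin as [<-|Hin]; simpl.
    + split; auto. intros v Hv. destruct (vertex_eq_dec v x). subst; rewrite upd_eq in Hv; tauto.
      rewrite upd_neq in Hv; auto.
    + apply (Hbirth two); auto. congruence.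
Qed.
Lemma sumR_cons phi a l : sumR phi (a :: l) = phi a + sumR phi l.
Proof. reflexivity. Qed.

Lemma sum_map_bound (h : vertex -> mv) (p : vertex -> bool) (a b : mv -> R) c l :
  (forall y, In y l -> a (h y) + (if p y then c / 2 else 0) <= b (h y)) ->
  sumR a (map h l) + c / 2 * INR (cnt p l) <= sumR b (map h l).
Proof. induction l as [|y l IH]; intros H; simpl; [unfold cnt; simpl; lra|].
  pose proof (H y (or_introl eq_refl)).
  assert (IH' := IH (fun z Hz => H z (or_intror Hz))).
  unfold cnt in *. simpl. destruct (p y); simpl length; try rewrite S_INR; lra. Qed.

Definition FF d (m : mv) : nat := Fp d (fst (snd m)) (snd (snd m)).

Lemma free_vac d xi x y : free d xi x y -> xi y = vac.
Proof. intros [V [O [N B]]]. destruct (xi y) eqn:E; auto; exfalso; apply (B y); try congruence; eapply inb_self_v; eauto. Qed.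

Lemma births_one d xi L x : (3 <= d)%nat -> covers d xi L -> xi x = one ->
  sumR (fun m => fst m * pw (FF d m)) (births d xi L x one) + pw (Fp d xi L) / 2 * INR (gf d xi x)
  <= sumR (fun m => fst m * pw (Fp d xi L)) (births d xi L x one).
Proof. intros Hd C Ox. unfold births.
  assert (G : gf d xi x = cnt (freeb d xi x) (filter (fun y => is_vac (xi y)) (neighbours d x))).
  { unfold gf. rewrite cnt_filter; auto. intros v F. apply freeb_spec in F. rewrite (free_vac _ _ _ _ F). auto. }
  rewrite G. apply sum_map_bound. intros y Hy. apply filter_In in Hy. destruct Hy as [N Vy].
  assert (Vy' : xi y = vac) by (destruct (xi y); auto; discriminate).
  assert (Vx : is_vertex d x) by (apply C; congruence).
  unfold FF; simpl. destruct (freeb d xi x y) eqn:E.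
  - apply freeb_spec in E. pose proof (F_birth_free d xi L x y ltac:(lia) Vy' ltac:(congruence) Vx N E).
    assert (pw (Fp d (upd xi y one) (y :: L)) <= pw (S (Fp d xi L))) by (apply pw_le; lia).
    rewrite pw_S in H0. lra.
  - assert (~ free d xi x y) by (intros F; apply freeb_spec in F; congruence).
    pose proof (F_birth_nonfree d xi L x y one Vy' ltac:(congruence) Vx N H).
    pose proof (pw_le _ _ H0). lra. Qed.

Lemma births_two d xi L x : covers d xi L -> xi x = two ->
  sumR (fun m => fst m * pw (FF d m)) (births d xi L x two)
  <= sumR (fun m => fst m * pw (Fp d xi L)) (births d xi L x two).
Proof. intros C Tx. unfold births. apply sumR_le. intros m Hm. apply in_map_iff in Hm.
  destruct Hm as [y [<- Hy]]. apply filter_In in Hy. destruct Hy as [N Vy].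
  assert (Vy' : xi y = vac) by (destruct (xi y); auto; discriminate).
  assert (Vx : is_vertex d x) by (apply C; congruence).
  unfold FF; simpl.
  assert (~ free d xi x y) by (intros [_ [O _]]; congruence).
  pose proof (F_birth_nonfree d xi L x y two Vy' ltac:(congruence) Vx N H).
  pose proof (pw_le _ _ H0). lra. Qed.

Lemma subharm d delta mu xi L : (3 <= d)%nat -> 0 < delta -> 0 < mu -> (delta + mu) * 2 ^ d <= / 2 ->
  covers d xi L ->
  sumR (fun m => fst m * pw (FF d m)) (moves d delta mu xi L)
  <= sumR (fun m => fst m * pw (Fp d xi L)) (moves d delta mu xi L).
Proof. intros Hd Hdel Hmu Heps C. unfold moves. apply sumR_flat_le. intros x Hx.
  apply nodup_In in Hx. set (F := Fp d xi L). pose proof (pw_nonneg F) as q0.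
  cbv beta. destruct (xi x) eqn:E.
  - simpl. lra.
  - rewrite !sumR_cons. unfold FF at 1 2. simpl fst. simpl snd.
    pose proof (births_one d xi L x Hd C E) as B. fold F in B.
    pose proof (F_shrink d xi L x vac ltac:(congruence)) as S1.
    pose proof (F_shrink d xi L x two ltac:(congruence)) as S2. fold F in S1, S2.
    destruct (gf d xi x) as [|k] eqn:K.
    + simpl INR in B. pose proof (pw_le _ _ ltac:(rewrite Nat.add_0_r in S1; exact S1)).
      pose proof (pw_le _ _ ltac:(rewrite Nat.add_0_r in S2; exact S2)). nra.
    + pose proof (pw_shift _ _ _ S1). pose proof (pw_shift _ _ _ S2).
      assert (S k <= d)%nat by (rewrite <- K; apply gf_le_d; lia).
      assert (2 ^ S k <= 2 ^ d) by (apply Rle_pow; lra || lia).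
      assert (1 <= INR (S k)) by (rewrite S_INR; pose proof (pos_INR k); lra).
      assert (pw F * 2 ^ S k <= pw F * 2 ^ d) by (apply Rmult_le_compat_l; lra).
      assert (pw F * ((delta + mu) * 2 ^ d) <= pw F * / 2) by (apply Rmult_le_compat_l; lra).
      nra.
  - rewrite !sumR_cons. unfold FF at 1. simpl fst. simpl snd.
    pose proof (births_two d xi L x C E) as B. fold F in B.
    pose proof (F_shrink d xi L x vac ltac:(congruence)) as S1. fold F in S1.
    rewrite gf_zero in S1 by congruence. rewrite Nat.add_0_r in S1.
    pose proof (pw_le _ _ S1). nra.
Qed.
Lemma surv_S d delta mu n xi L : surv_n d delta mu (S n) xi L =
  if has_one xi L then sumR (fun m => fst m / total_rate d delta mu xi L * surv_n d delta mu n (fst (snd m)) (snd (snd m))) (moves d delta mu xi L) else 0.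
Proof. reflexivity. Qed.
Lemma surv_0 d delta mu xi L : surv_n d delta mu 0 xi L = if has_one xi L then 1 else 0.
Proof. reflexivity. Qed.
Lemma total_sumR d delta mu xi L : total_rate d delta mu xi L = sumR fst (moves d delta mu xi L).
Proof. reflexivity. Qed.
Lemma sumR_scale c phi l : sumR (fun m => c * phi m) l = c * sumR phi l.
Proof. induction l; simpl; [lra|]. unfold sumR in *. rewrite IHl. lra. Qed.

Lemma death_in d delta mu xi L x : In x L -> xi x <> vac -> In (delta, (upd xi x vac, L)) (moves d delta mu xi L).
Proof. intros Hx Ox. unfold moves. apply in_flat_map. exists x. split. apply nodup_In; auto.
  destruct (xi x); [congruence|left; auto|left; auto]. Qed.

Lemma has_one_true xi L : has_one xi L = true -> exists x, In x L /\ xi x = one.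
Proof. unfold has_one. intros H. apply existsb_exists in H. destruct H as [x [Hx E]]. exists x.
  split; auto. destruct (xi x); simpl in E; congruence. Qed.

Lemma T_pos d delta mu xi L : 0 < delta -> 0 <= mu -> covers d xi L -> has_one xi L = true ->
  delta <= total_rate d delta mu xi L.
Proof. intros Hd Hm C H. destruct (has_one_true _ _ H) as [x [Hx O]].
  rewrite total_sumR. apply (sumR_elem fst _ (delta, (upd xi x vac, L))).
  intros m Hm'. apply (moves_inv d delta mu xi L m C); lra || auto.
  apply death_in; auto; congruence. Qed.

Lemma surv_nonneg d delta mu n : 0 < delta -> 0 <= mu -> forall xi L, covers d xi L -> 0 <= surv_n d delta mu n xi L.
Proof. intros Hd Hm. induction n; intros xi L C.
  - rewrite surv_0. destruct (has_one xi L); lra.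
  - rewrite surv_S. destruct (has_one xi L) eqn:H; [|lra].
    pose proof (T_pos d delta mu xi L Hd Hm C H).
    apply sumR_nonneg. intros m Hin. destruct (moves_inv d delta mu xi L m C) as [R0 C']; try lra; auto.
    pose proof (IHn _ _ C'). unfold Rdiv. apply Rmult_le_pos; auto. apply Rmult_le_pos; auto.
    left; apply Rinv_0_lt_compat; lra. Qed.

Lemma sumn_zero {A} (f : A -> nat) l : (forall u, In u l -> f u = 0%nat) -> sumn f l = 0%nat.
Proof. induction l; simpl; intros H; auto. rewrite H, IHl; auto. Qed.

Lemma Fp_zero d xi L : covers d xi L -> has_one xi L = false -> Fp d xi L = 0%nat.
Proof. intros C H. unfold Fp. apply sumn_zero. intros u Hu. apply gf_zero. intros O.
  apply nodup_In in Hu. assert (existsb (fun x => is_one (xi x)) L = true).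
  { apply existsb_exists. exists u. rewrite O. auto. }
  unfold has_one in H. congruence. Qed.

Lemma H_le_surv d delta mu : (3 <= d)%nat -> 0 < delta -> 0 < mu -> (delta + mu) * 2 ^ d <= / 2 ->
  forall n xi L, covers d xi L -> 1 - pw (Fp d xi L) <= surv_n d delta mu n xi L.
Proof. intros Hd Hdel Hmu Heps. induction n; intros xi L C.
  - rewrite surv_0. destruct (has_one xi L) eqn:H.
    + pose proof (pw_nonneg (Fp d xi L)). lra.
    + rewrite Fp_zero; auto. unfold pw; simpl; lra.
  - rewrite surv_S. destruct (has_one xi L) eqn:H.
    2:{ rewrite Fp_zero; auto. unfold pw; simpl; lra. }
    set (T := total_rate d delta mu xi L). assert (TP : delta <= T) by (apply T_pos; auto; lra).
    set (F := Fp d xi L).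
    eapply Rle_trans with (sumR (fun m => / T * fst m + (- / T) * (fst m * pw (FF d m))) (moves d delta mu xi L)).
    2:{ apply sumR_le. intros m Hin. destruct (moves_inv d delta mu xi L m C) as [R0 C']; try lra; auto.
        pose proof (IHn _ _ C'). unfold FF. unfold Rdiv.
        assert (0 <= fst m * / T) by (apply Rmult_le_pos; auto; left; apply Rinv_0_lt_compat; lra).
        assert (fst m * / T * (1 - pw (Fp d (fst (snd m)) (snd (snd m)))) <= fst m * / T * surv_n d delta mu n (fst (snd m)) (snd (snd m))) by (apply Rmult_le_compat_l; auto).
        nra. }
    rewrite sumR_lin.
    pose proof (subharm d delta mu xi L Hd Hdel Hmu Heps C) as S. fold F in S.
    rewrite (sumR_ext (fun m => fst m * pw F) (fun m => pw F * fst m)) in S by (intros; lra).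
    rewrite sumR_scale in S. rewrite <- total_sumR in S |- *. fold T in S |- *.
    assert (IT : 0 < / T) by (apply Rinv_0_lt_compat; lra).
    assert (/ T * T = 1) by (field; lra).
    assert (/ T * sumR (fun m => fst m * pw (FF d m)) (moves d delta mu xi L) <= / T * (pw F * T)) by (apply Rmult_le_compat_l; lra).
    assert (/ T * (pw F * T) = pw F) by (field; lra). lra.
Qed.
Lemma filter_lt {A} (p p' : A -> bool) l u : (forall v, In v l -> p' v = true -> p v = true) ->
  In u l -> p u = true -> p' u = false -> (cnt p' l < cnt p l)%nat.
Proof. induction l as [|a l IH]; intros H Hu Pu Pu'; [destruct Hu|].
  unfold cnt in *. simpl. destruct Hu as [<-|Hu].
  - rewrite Pu, Pu'. simpl. pose proof (cnt_mono p' p l (fun v Hv => H v (or_intror Hv))). unfold cnt in H0. lia.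
  - specialize (IH (fun v Hv => H v (or_intror Hv)) Hu Pu Pu').
    destruct (p' a) eqn:E. rewrite (H a (or_introl eq_refl) E). simpl. lia.
    destruct (p a); simpl; lia. Qed.

Lemma cnt_pos {A} (p : A -> bool) l v : In v l -> p v = true -> (1 <= cnt p l)%nat.
Proof. intros Hv Pv. unfold cnt. destruct (filter p l) eqn:E. 
  assert (In v (filter p l)) by (apply filter_In; auto). rewrite E in H; destruct H. simpl; lia. Qed.

Definition occ (x0 : vertex) (xi : config) (L : list vertex) : nat :=
  cnt (fun v => andb (negb (is_vac (xi v))) (if vertex_eq_dec v x0 then false else true)) (nodup vertex_eq_dec L).

Lemma reduce d delta mu x0 : (3 <= d)%nat -> 0 < delta -> 0 < mu -> (delta + mu) * 2 ^ d <= / 2 ->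
  forall k xi L, covers d xi L -> xi x0 = one -> (occ x0 xi L < k)%nat ->
  exists c, 0 < c <= 1 /\ forall n, c <= surv_n d delta mu n xi L.
Proof. intros Hd Hdel Hmu Heps. induction k; intros xi L C O Hk; [lia|].
  assert (Hx0 : In x0 L) by (apply C; congruence).
  assert (HO : has_one xi L = true) by (apply existsb_exists; exists x0; rewrite O; auto).
  unfold occ, cnt in Hk.
  destruct (filter (fun v => andb (negb (is_vac (xi v))) (if vertex_eq_dec v x0 then false else true)) (nodup vertex_eq_dec L)) as [|u rest] eqn:Ef.
  - exists (/2). split; [lra|]. intros n.
    assert (1 <= Fp d xi L)%nat.
    { destruct (nb_exists d x0 ltac:(lia)) as [v Hv].
      assert (Fr : free d xi x0 v).
      { repeat split; auto. apply C; congruence.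
        intros z Hz. destruct (vertex_eq_dec z x0). subst. eapply inb_self_u; eauto.
        exfalso. assert (In z (filter (fun v => andb (negb (is_vac (xi v))) (if vertex_eq_dec v x0 then false else true)) (nodup vertex_eq_dec L))).
        { apply filter_In. split. apply nodup_In, C; auto. destruct (xi z); [congruence| |];
          destruct (vertex_eq_dec z x0); try congruence; auto. }
        rewrite Ef in H; destruct H. }
      assert (1 <= gf d xi x0)%nat by (eapply cnt_pos; eauto; apply freeb_spec; auto).
      pose proof (sumn_elem (gf d xi) (nodup vertex_eq_dec L) x0 ltac:(apply nodup_In; auto)).
      unfold Fp. lia. }
    pose proof (H_le_surv d delta mu Hd Hdel Hmu Heps n xi L C).
    pose proof (pw_le _ _ H). unfold pw at 2 in H1. simpl in H1. lra.
  - assert (Hu : In u (filter (fun v => andb (negb (is_vac (xi v))) (if vertex_eq_dec v x0 then false else true)) (nodup vertex_eq_dec L))) by (rewrite Ef; left; auto).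
    apply filter_In in Hu. destruct Hu as [HuL Pu]. apply nodup_In in HuL.
    assert (Ou : xi u <> vac) by (intros E; rewrite E in Pu; discriminate).
    assert (Nu : u <> x0) by (intros ->; destruct (vertex_eq_dec x0 x0); [destruct (negb _); discriminate| congruence]).
    set (xi' := upd xi u vac).
    assert (Min : In (delta, (xi', L)) (moves d delta mu xi L)) by (apply death_in; auto).
    destruct (moves_inv d delta mu xi L _ C ltac:(lra) ltac:(lra) Min) as [_ C']. simpl in C'.
    assert (O' : xi' x0 = one) by (unfold xi'; rewrite upd_neq; auto).
    assert (Hk' : (occ x0 xi' L < k)%nat).
    { simpl in Hk. assert (occ x0 xi' L < S (length rest))%nat; [|lia].
      change (S (length rest)) with (length (u :: rest)). rewrite <- Ef. fold (cnt (fun v => andb (negb (is_vac (xi v))) (if vertex_eq_dec v x0 then false else true)) (nodup vertex_eq_dec L)).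
      unfold occ. apply (filter_lt _ _ _ u).
      - intros v _ P. unfold xi' in P. destruct (vertex_eq_dec v u). subst. rewrite upd_eq in P. discriminate.
        rewrite upd_neq in P; auto.
      - apply nodup_In; auto.
      - destruct (xi u); [congruence| |]; destruct (vertex_eq_dec u x0); try congruence; auto.
      - unfold xi'. rewrite upd_eq. auto. }
    destruct (IHk xi' L C' O' Hk') as [c [[c0 c1] Hc]].
    set (T := total_rate d delta mu xi L). assert (TP : delta <= T) by (apply T_pos; auto; lra).
    assert (IT : 0 < / T) by (apply Rinv_0_lt_compat; lra).
    assert (DT : delta / T <= 1) by (apply Rmult_le_reg_r with T; [lra|]; unfold Rdiv; rewrite Rmult_assoc, Rinv_l; lra).
    exists (delta / T * c). split. split. unfold Rdiv. apply Rmult_lt_0_compat; auto. apply Rmult_lt_0_compat; lra.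
    assert (0 < delta / T) by (unfold Rdiv; apply Rmult_lt_0_compat; lra). nra.
    intros n. destruct n.
    + rewrite surv_0, HO. assert (0 < delta / T) by (unfold Rdiv; apply Rmult_lt_0_compat; lra). nra.
    + rewrite surv_S, HO. fold T.
      eapply Rle_trans; [| apply (sumR_elem _ _ (delta, (xi', L)))]; auto.
      * simpl. pose proof (Hc n). assert (0 < delta / T) by (unfold Rdiv; apply Rmult_lt_0_compat; lra). nra.
      * intros m Hm. destruct (moves_inv d delta mu xi L m C ltac:(lra) ltac:(lra) Hm) as [R0 Cm].
        pose proof (surv_nonneg d delta mu n Hdel ltac:(lra) _ _ Cm).
        unfold Rdiv. apply Rmult_le_pos; auto. apply Rmult_le_pos; lra.
Qed.

Theorem proposition3 :
  forall d : nat, (3 <= d)%nat ->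
  exists eps : R, 0 < eps /\
    forall delta mu : R, 0 < delta -> 0 < mu -> delta + mu < eps ->
    forall (xi0 : config) (L0 : list vertex),
      covers d xi0 L0 ->
      (exists x, xi0 x = one) ->
      exists c : R, 0 < c /\ forall n : nat, c <= surv_n d delta mu n xi0 L0.
Proof.
  intros d Hd. assert (P : 0 < 2 ^ d) by (apply pow_lt; lra).
  exists (/ (2 * 2 ^ d)). split. apply Rinv_0_lt_compat; lra.
  intros delta mu Hdel Hmu Heps xi0 L0 C [x0 O].
  assert (E : (delta + mu) * 2 ^ d <= / 2).
  { apply Rmult_lt_compat_r with (r := 2 ^ d) in Heps; auto.
    replace (/ (2 * 2 ^ d) * 2 ^ d) with (/2) in Heps by (field; lra). lra. }
  destruct (reduce d delta mu x0 Hd Hdel Hmu E (S (occ x0 xi0 L0)) xi0 L0 C O ltac:(lia)) as [c [[c0 _] Hc]].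
  exists c. auto.
Qed.
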